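(* Let $a>2$ and $s\ge 1$ be integers and $A=(sa,\ sa+1,\ sa+a)$. Then $g(A)=as(a+s-2)-1$.
   Context: For a tuple $A$ of positive integers with $\gcd(A)=1$, the Frobenius number $g(A)$ is the largest nonnegative integer that cannot be written as a nonnegative integer combination of the entries of $A$. *)

(* Defs.v *)
From mathcomp Require Import all_boot.
Set Implicit Arguments. Unset Strict Implicit. Unset Printing Implicit Defensive.

Definition representable (A : seq nat) (n : nat) : Prop :=
  exists c : seq nat, size c = size A /\ n = \sum_(i < size A) nth 0 c i * nth 0 A i.

Definition is_frobenius_number (A : seq nat) (g : nat) : Prop :=
  ~ representable A g /\ forall n, g < n -> representable A n.

(* Main.v *)
Require Import Defs.
From mathcomp Require Import all_boot.
From mathcomp Require Import zify.

Lemma sum3 (c A : seq nat) : size A = 3 ->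
  \sum_(i < size A) nth 0 c i * nth 0 A i =
  nth 0 c 0 * nth 0 A 0 + nth 0 c 1 * nth 0 A 1 + nth 0 c 2 * nth 0 A 2.
Proof.
move=> ->; rewrite !big_ord_recr big_ord0 /=; lia.
Qed.

Theorem mainTheorem3 (a s : nat) (ha : 2 < a) (hs : 1 <= s) :
  is_frobenius_number [:: s * a; s * a + 1; s * a + a] (a * s * (a + s - 2) - 1).
Proof.
have hpos : 0 < a * s * (a + s - 2) by rewrite !muln_gt0; apply/andP; split; [apply/andP; split|]; lia.
split.
- case=> c [hc]; rewrite sum3 //.
  case: c hc => [|x [|y [|z [|]]]] //= _ E.
  set S := s * (a + s - 2).
  have hS : a * s * (a + s - 2) = a * S by rewrite /S mulnA.
  rewrite hS in E hpos.
  have hy := divn_eq y a.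
  set u := y %/ a in hy; set t := y %% a in hy.
  have ht : t < a by rewrite ltn_mod; lia.
  set K := x + y + z.
  have id : x * (s * a) + y * (s * a + 1) + z * (s * a + a) = a * (K * s + u + z) + t.
    by rewrite /K hy; lia.
  have e : a * (K * s + u + z) + t + 1 = a * S by lia.
  have hlt : K * s + u + z < S.
    rewrite ltnNge; apply/negP => hle.
    have : a * S <= a * (K * s + u + z) by rewrite leq_mul2l hle orbT.
    lia.
  have e2 : a * (S - (K * s + u + z)) = t + 1.
    rewrite mulnBr; lia.
  have hX : S - (K * s + u + z) = 1.
    have h1 : 0 < S - (K * s + u + z) by lia.
    have h2 : S - (K * s + u + z) < 2.
      rewrite ltnNge; apply/negP => h2.
      have : a * 2 <= a * (S - (K * s + u + z)) by rewrite leq_mul2l h2 orbT.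
      lia.
    lia.
  have ht1 : t = a - 1 by rewrite hX in e2; lia.
  have hKS : K < a + s - 2.
    rewrite ltnNge; apply/negP => hle.
    have : S <= K * s by rewrite /S mulnC leq_mul2r hle orbT.
    lia.
  have [j [hKj hj]] : exists j, K + j = a + s - 2 /\ 0 < j.
    by exists (a + s - 2 - K); lia.
  have hw2 : u + z + 1 = j * s.
    have : (K + j) * s = S by rewrite hKj /S mulnC.
    lia.
  have hKy : a - 1 + u * a + z <= K by rewrite /K hy; lia.
  have hua : u <= u * a by rewrite leq_pmulr //; lia.
  have hjs : s <= j * s by rewrite leq_pmull.
  lia.
- move=> n hn.
  have hm : 0 < s * a by rewrite muln_gt0; apply/andP; split; lia.
  have hn2 : (a + s - 2) * (s * a) <= n.
    have : a * s * (a + s - 2) <= n by lia.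
    by rewrite mulnC (mulnC s a).
  have hnd := divn_eq n (s * a).
  set k := n %/ (s * a) in hnd; set r := n %% (s * a) in hnd.
  have hr : r < s * a by rewrite ltn_mod.
  have hk : a + s - 2 <= k by rewrite /k leq_divRL.
  have hrd := divn_eq r a.
  set q := r %/ a in hrd; set t := r %% a in hrd.
  have ht : t < a by rewrite ltn_mod; lia.
  have hq : q < s by rewrite /q ltn_divLR //; lia.
  have [d hd] : exists d, k = d + q + t by exists (k - q - t); lia.
  exists [:: d; t; q]; split => //.
  rewrite sum3 //= hnd hrd hd; lia.
Qed.
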